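(* Let $\mathbf A$ be a residuated semigroup balanced over $\mathbf I$. Then $(u_a/u_a)/u_b=(u_a/u_b)/(u_a/u_b)$ holds for all $a,b\in A$ if and only if $I$ has exactly one element.
   Context: A residuated semigroup is a structure $\langle A,\le,\cdot,\backslash,/\rangle$ where $\langle A,\le\rangle$ is a poset, $\langle A,\cdot\rangle$ is a semigroup, and $xy\le z\iff x\le z/y\iff y\le x\backslash z$. An element $p$ is positive if $a\le pa$ and $a\le ap$ for all $a$, idempotent if $pp=p$, central if $pa=ap$ for all $a$. Let $I$ be a nonempty set of central positive idempotents of $\mathbf A$ closed under multiplication ($\mathbf I=\langle I,\cdot\rangle$). $\mathbf A$ is balanced over $\mathbf I$ if for every $a\in A$ the element $u_a:=\max\{p\in I: pa=a\}$ exists (maximum w.r.t. $\le$). *)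

(* Defs.v *)
(* <A, le, mul, ldiv, rdiv> : ldiv x z = x\z, rdiv z y = z/y. *)
Record residuated_semigroup {A : Type} (le : A -> A -> Prop)
  (mul ldiv rdiv : A -> A -> A) : Prop := {
  rs_refl : forall x, le x x;
  rs_trans : forall x y z, le x y -> le y z -> le x z;
  rs_antisym : forall x y, le x y -> le y x -> x = y;
  rs_assoc : forall x y z, mul (mul x y) z = mul x (mul y z);
  rs_resid_r : forall x y z, le (mul x y) z <-> le x (rdiv z y);
  rs_resid_l : forall x y z, le (mul x y) z <-> le y (ldiv x z)
}.

Definition positive {A : Type} (le : A -> A -> Prop) (mul : A -> A -> A) (p : A) :=
  forall a, le a (mul p a) /\ le a (mul a p).
Definition idempotent {A : Type} (mul : A -> A -> A) (p : A) := mul p p = p.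
Definition central {A : Type} (mul : A -> A -> A) (p : A) := forall a, mul p a = mul a p.

Definition idem_set {A : Type} (le : A -> A -> Prop) (mul : A -> A -> A)
  (I : A -> Prop) : Prop :=
  (exists p, I p) /\
  (forall p, I p -> central mul p /\ positive le mul p /\ idempotent mul p) /\
  (forall p q, I p -> I q -> I (mul p q)).

Definition is_max {A : Type} (le : A -> A -> Prop) (S : A -> Prop) (m : A) : Prop :=
  S m /\ forall x, S x -> le x m.

Definition balanced_by {A : Type} (le : A -> A -> Prop) (mul : A -> A -> A)
  (I : A -> Prop) (u : A -> A) : Prop :=
  forall a, is_max le (fun p => I p /\ mul p a = a) (u a).

Definition balanced {A : Type} (le : A -> A -> Prop) (mul : A -> A -> A)
  (I : A -> Prop) : Prop := exists u, balanced_by le mul I u.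

(* Main.v *)
Require Import Defs.

Section S.
Context (A : Type) (le : A -> A -> Prop) (mul ldiv rdiv : A -> A -> A)
  (H : residuated_semigroup le mul ldiv rdiv).

Lemma monoL x y z : le x y -> le (mul z x) (mul z y).
Proof.
  intro h. apply (rs_resid_l _ _ _ _ H). apply (rs_trans _ _ _ _ H) with y; auto.
  apply (rs_resid_l _ _ _ _ H). apply (rs_refl _ _ _ _ H).
Qed.

Lemma monoR x y z : le x y -> le (mul x z) (mul y z).
Proof.
  intro h. apply (rs_resid_r _ _ _ _ H). apply (rs_trans _ _ _ _ H) with y; auto.
  apply (rs_resid_r _ _ _ _ H). apply (rs_refl _ _ _ _ H).
Qed.
End S.

Theorem lemma6p8 (A : Type) (le : A -> A -> Prop) (mul ldiv rdiv : A -> A -> A)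
  (I : A -> Prop) (u : A -> A) :
  residuated_semigroup le mul ldiv rdiv ->
  idem_set le mul I ->
  balanced_by le mul I u ->
  ((forall a b, rdiv (rdiv (u a) (u a)) (u b) = rdiv (rdiv (u a) (u b)) (rdiv (u a) (u b)))
   <-> (exists p, I p /\ forall q, I q -> q = p)).
Proof.
  intros H [[p0 Hp0] [HI Hcl]] Hb.
  pose proof (rs_refl _ _ _ _ H) as refl.
  pose proof (rs_trans _ _ _ _ H) as trans.
  pose proof (rs_antisym _ _ _ _ H) as anti.
  pose proof (rs_assoc _ _ _ _ H) as assoc.
  pose proof (rs_resid_r _ _ _ _ H) as rr.
  assert (uI : forall p, I p -> u p = p).
  { intros p Ip. destruct (Hb p) as [[Iu Eu] Mu].
    destruct (HI p Ip) as [_ [pp0 idp]].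
    destruct (HI _ Iu) as [cu [pu _]].
    apply anti.
    - pose proof (proj1 (pp0 (u p))) as hh. rewrite <- cu, Eu in hh. exact hh.
    - apply Mu. split; auto. }
  split.
  - intros Hid. exists p0. split; auto.
    assert (key : forall p q, I p -> I q -> p = mul p q).
    { intros p q Ip Iq.
      set (r := mul p q). assert (Ir : I r) by (apply Hcl; auto).
      destruct (HI p Ip) as [cp [pp idp]].
      destruct (HI q Iq) as [cq [pq idq]].
      destruct (HI r Ir) as [cr [pr idr]].
      assert (rp : mul r p = r).
      { unfold r. rewrite (assoc p q p), <- (cp q), <- (assoc p p q), idp. reflexivity. }
      assert (E := Hid p r). rewrite (uI p Ip), (uI r Ir) in E.
      assert (h1 : le r (rdiv (rdiv p p) r)).
      { rewrite E. apply (proj1 (rr _ _ _)). rewrite cr. apply (proj1 (rr _ _ _)). rewrite assoc, idr. apply (proj2 (rr _ _ _)). apply refl. }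
      apply (proj2 (rr _ _ _)), (proj2 (rr _ _ _)) in h1. rewrite assoc, rp, idr in h1.
      apply anti.
      - unfold r. apply (proj2 (pq p)).
      - exact h1. }
    intros q Iq.
    destruct (HI p0 Hp0) as [cp _].
    transitivity (mul q p0). apply key; auto. rewrite <- cp. symmetry. apply key; auto.
  - intros [p [Ip Hu]] a b.
    destruct (Hb a) as [[Ia _] _]. destruct (Hb b) as [[Ib _] _].
    rewrite (Hu _ Ia), (Hu _ Ib).
    destruct (HI p Ip) as [cp [pp idp]].
    set (e := rdiv p p).
    assert (pe : le p e) by (apply (proj1 (rr _ _ _)); rewrite idp; apply refl).
    assert (ep : le (mul e p) p) by (apply (proj2 (rr _ _ _)); apply refl).
    assert (E1 : rdiv e p = e).
    { apply anti.
      - apply (proj1 (rr _ _ _)). apply trans with (mul (mul (rdiv e p) p) p).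
        + apply (proj2 (pp _)).
        + apply (proj2 (rr _ _ _)). apply (proj2 (rr _ _ _)). apply refl.
      - apply (proj1 (rr _ _ _)). apply (proj1 (rr _ _ _)). rewrite assoc, idp. exact ep. }
    assert (E2 : rdiv e e = e).
    { apply anti.
      - apply trans with (mul (rdiv e e) e).
        + apply trans with (mul (rdiv e e) p).
          * apply (proj2 (pp _)).
          * apply (monoL _ _ _ _ _ H). exact pe.
        + apply (proj2 (rr _ _ _)). apply refl.
      - apply (proj1 (rr _ _ _)). apply (proj1 (rr _ _ _)). rewrite assoc.
        apply trans with (mul e p); [apply (monoL _ _ _ _ _ H); exact ep | exact ep]. }
    rewrite E1, E2. reflexivity.
Qed.
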